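(* Let $P(z) \in \mathbb{Z}[z]$ have degree at least $2$ with $P(0)=0$, and let $H(n,x,z) = \frac{P(z+nx) - P(z)}{x} \in \mathbb{Z}[n,x,z]$. For $n \in \mathbb{Z}_{\geq 0}$ define maps $\mathbb{Z}^3 \to \mathbb{Z}^3$ by $S_1(n)(x,y,z) = (x, y + H(n,x,z), z + nx)$ and $S_2(n)(x,y,z) = (x + H(n,y,z), y, z + ny)$, and let $\Gamma$ be the semigroup generated by $\{S_1(n), S_2(n) : n \geq 0\}$. Then each $S_i(n)$ preserves $F(x,y,z) = xy - P(z)$, and for every $v_0 = (x_0, y_0, z_0) \in \mathbb{Z}^3$ with $x_0 \neq 0$, the orbit $\Gamma v_0$ is hyperplane-fleeing.
   Context: A set $A \subset \mathbb{R}^d$ is hyperplane-fleeing if $A$ is not contained in any proper affine subspace (translate of a proper linear subspace) of $\mathbb{R}^d$. *)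

(* Defs.v *)
From HB Require Import structures.
From mathcomp Require Import all_boot all_order all_algebra.
Set Implicit Arguments. Unset Strict Implicit. Unset Printing Implicit Defensive.
Import Order.TTheory GRing.Theory Num.Theory.
Local Open Scope ring_scope.

Definition Z3 := (int * int * int)%type.

(* H(n,x,z) = (P(z+nx) - P(z))/x, written out as the polynomial in Z[n,x,z]
   obtained by expanding (z+nx)^i with the binomial theorem and dividing by x:
   sum_i p_i * sum_{k=1}^{i} C(i,k) z^(i-k) n^k x^(k-1). *)
Definition Hpol (P : {poly int}) (n x z : int) : int :=
  \sum_(i < size P) P`_i *
     \sum_(1 <= k < i.+1) ('C(i, k)%:R * z ^+ (i - k) * n ^+ k * x ^+ k.-1).

Definition S1 (P : {poly int}) (n : nat) (v : Z3) : Z3 :=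
  let: (x, y, z) := v in (x, y + Hpol P n%:Z x z, z + n%:Z * x).

Definition S2 (P : {poly int}) (n : nat) (v : Z3) : Z3 :=
  let: (x, y, z) := v in (x + Hpol P n%:Z y z, y, z + n%:Z * y).

Definition Fform (P : {poly int}) (v : Z3) : int :=
  let: (x, y, z) := v in x * y - P.[z].

Inductive inGamma (P : {poly int}) : (Z3 -> Z3) -> Prop :=
  | Gam_S1 n : inGamma P (S1 P n)
  | Gam_S2 n : inGamma P (S2 P n)
  | Gam_comp f g : inGamma P f -> inGamma P g -> inGamma P (f \o g).

Definition Gorbit (P : {poly int}) (v0 : Z3) (w : Z3) : Prop :=
  exists g, inGamma P g /\ w = g v0.

Definition embed (R : realFieldType) (v : Z3) : 'rV[R]_3 :=
  let: (x, y, z) := v in \row_(i < 3) (nth 0 [:: x; y; z] i)%:~R.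

(* A subset A of R^d is hyperplane-fleeing if it is not contained in any
   proper affine subspace v + U (U a linear subspace, the row space of a
   matrix of rank < d). *)
Definition hyperplane_fleeing (R : realFieldType) (d : nat)
    (A : 'rV[R]_d -> Prop) : Prop :=
  ~ exists (v : 'rV[R]_d) (U : 'M[R]_d),
      (\rank U < d)%N /\ forall a, A a -> (a - v <= U)%MS.

(* Main.v *)
Require Import Defs.
From HB Require Import structures.
From mathcomp Require Import all_boot all_order all_algebra.
From mathcomp Require Import ring.
Import Order.TTheory GRing.Theory Num.Theory.
Local Open Scope ring_scope.

Lemma binom_shift (R : comNzRingType) (x n z : R) (i : nat) :
  x * \sum_(1 <= k < i.+1) ('C(i, k)%:R * z ^+ (i - k) * n ^+ k * x ^+ k.-1)
  = (z + n * x) ^+ i - z ^+ i.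
Proof.
rewrite exprDn big_ord_recl /= subn0 bin0 expr0 mulr1 mulr1n addrAC subrr add0r.
rewrite big_add1 /= big_mkord mulr_sumr; apply: eq_bigr => k _.
rewrite /bump /= add1n exprMn !exprS.
rewrite -mulr_natl; ring.
Qed.

Lemma Hpol_mul (P : {poly int}) n x z : x * Hpol P n x z = P.[z + n * x] - P.[z].
Proof.
rewrite /Hpol !horner_coef -sumrB mulr_sumr; apply: eq_bigr => i _.
by rewrite mulrCA binom_shift mulrBr.
Qed.

Lemma Hpol0 (P : {poly int}) x z : Hpol P 0 x z = 0.
Proof.
rewrite /Hpol big1 // => i _; rewrite big_add1 big1 ?mulr0 // => k _.
by rewrite expr0n /= mulr0 mul0r.
Qed.

Lemma arith_nonroot (R : numDomainType) (Q : {poly R}) (z x : R) :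
  x != 0 -> Q != 0 -> exists n : nat, Q.[z + n%:R * x] != 0.
Proof.
move=> hx hQ.
set rs := [seq z + i%:R * x | i <- iota 0 (size Q)].
have hu : uniq rs.
  rewrite map_inj_uniq ?iota_uniq // => i j /addrI /(mulIf hx) /eqP.
  by rewrite eqr_nat => /eqP.
case: (boolP (all (root Q) rs)) => [hall|/allPn [t /mapP [i _ ->] hr]]; last by exists i.
by have := max_poly_roots hQ hall hu; rewrite size_map size_iota ltnn.
Qed.

Lemma coef_shift_const (R : nzRingType) (P : {poly R}) (c : R) :
  (2 < size P)%N -> (P - c%:P)`_(size P).-1 = lead_coef P.
Proof.
move=> h; rewrite coefB coefC lead_coefE.
by case: (size P) h => [|[|m]] //= _; rewrite subr0.
Qed.

Lemma Pnc (P : {poly int}) (hdeg : (2 < size P)%N) (z x : int) :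
  x != 0 -> exists n : nat, P.[z + n%:Z * x] != P.[z].
Proof.
move=> hx.
have hQ : P - P.[z]%:P != 0.
  apply/eqP => hQ; have := congr1 (fun q : {poly int} => q`_(size P).-1) hQ.
  rewrite coef_shift_const // coef0 => /eqP; rewrite lead_coef_eq0 => /eqP hP0.
  by move: hdeg; rewrite hP0 size_poly0.
have [n hn] := @arith_nonroot _ _ z x hx hQ.
exists n; move: hn; rewrite !hornerE natz.
by rewrite subr_eq0.
Qed.

Lemma emb_lin (R : realFieldType) (k : 'rV[R]_3) :
  exists c0 c1 c2 : R,
    (forall x y z, (embed R (x, y, z) *m k^T) 0 0
                   = c0 * x%:~R + c1 * y%:~R + c2 * z%:~R) /\
    (c0 = 0 -> c1 = 0 -> c2 = 0 -> k = 0).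
Proof.
exists (k 0 ord0), (k 0 (lift ord0 ord0)), (k 0 (lift ord0 (lift ord0 ord0))); split.
  move=> x y z; rewrite mxE !big_ord_recl big_ord0 addr0 !mxE /= addrA.
  by rewrite (mulrC x%:~R) (mulrC y%:~R) (mulrC z%:~R).
move=> h0 h1 h2; apply/rowP => j; rewrite mxE.
case: j => [[|[|[|m]]] hj] //.
- by rewrite (_ : Ordinal hj = ord0) //; apply: val_inj.
- by rewrite (_ : Ordinal hj = lift ord0 ord0) //; apply: val_inj.
- by rewrite (_ : Ordinal hj = lift ord0 (lift ord0 ord0)) //; apply: val_inj.
Qed.

Theorem mainTheorem4 (P : {poly int}) (hdeg : (2 < size P)%N) (hP0 : P.[0] = 0) :
  (forall (n : nat) (v : Z3), Fform P (S1 P n v) = Fform P v) /\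
  (forall (n : nat) (v : Z3), Fform P (S2 P n v) = Fform P v) /\
  (forall (v0 : Z3), v0.1.1 != 0 ->
     forall R : realFieldType,
       hyperplane_fleeing (fun a : 'rV[R]_3 => exists w, Gorbit P v0 w /\ a = embed R w)).
Proof.
split.
  move=> n [[x y] z] /=; rewrite mulrDr Hpol_mul; ring.
split.
  move=> n [[x y] z] /=; rewrite mulrDl (mulrC (Hpol _ _ _ _)) Hpol_mul; ring.
move=> [[x0 y0] z0] /= hx0 R [v [U [hrk hU]]].
set v0 := (x0, y0, z0).
have orb0 : Gorbit P v0 v0.
  exists (S1 P 0); split; first by constructor.
  by rewrite /v0 /S1 Hpol0 mul0r !addr0.
have orbS1 n w : Gorbit P v0 w -> Gorbit P v0 (S1 P n w).
  move=> [g [hg ->]]; exists (S1 P n \o g); split=> //.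
  by apply: Gam_comp => //; constructor.
have orbS2 n w : Gorbit P v0 w -> Gorbit P v0 (S2 P n w).
  move=> [g [hg ->]]; exists (S2 P n \o g); split=> //.
  by apply: Gam_comp => //; constructor.
set K := kermx U^T.
have hK : K != 0.
  by rewrite -mxrank_eq0 /K mxrank_ker mxrank_tr subn_eq0 -ltnNge.
have [i hi] : exists i, row i K != 0.
  case: (pickP (fun i => row i K != 0)) => [i hi|h]; first by exists i.
  move/negP: hK; case; apply/eqP/row_matrixP => i.
  by move/negbFE: (h i) => /eqP ->; rewrite row0.
set k := row i K.
have hk : k *m U^T = 0 by apply/sub_kermxP; exact: row_sub.
have [c0 [c1 [c2 [hlin hk0]]]] := emb_lin _ k.
set Kc := (v *m k^T) 0 0.
have hconst x y z : Gorbit P v0 (x, y, z) -> c0 * x%:~R + c1 * y%:~R + c2 * z%:~R = Kc.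
  move=> hw; have := hU (embed R (x, y, z)) (ex_intro _ _ (conj hw erefl)).
  case/submxP => D hD.
  have : ((embed R (x, y, z) - v) *m k^T) 0 0 = 0.
    by rewrite hD -mulmxA -[U *m k^T]trmxK trmx_mul trmxK hk trmx0 mulmx0 mxE.
  by rewrite mulmxBl mxE hlin mxE => /eqP; rewrite subr_eq0 => /eqP.
have E n : c1 * (Hpol P n%:Z x0 z0)%:~R + c2 * (n%:R * x0%:~R) = 0.
  have h1 := hconst _ _ _ (orbS1 n _ orb0).
  have h0 := hconst _ _ _ orb0.
  move: h1; rewrite -h0 !rmorphD rmorphM /= => /eqP; rewrite -subr_eq0 => /eqP h.
  rewrite -[RHS]h; change ((n%:Z)%:~R) with (n%:R : R); ring.
set PR := map_poly (intr : int -> R) P.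
have hx0R : (x0%:~R : R) != 0 by rewrite intr_eq0.
have E2 n : c1 * (PR.[z0%:~R + n%:R * x0%:~R] - PR.[z0%:~R])
            + c2 * x0%:~R * (n%:R * x0%:~R) = 0.
  have := congr1 (fun t => x0%:~R * t) (E n); rewrite mulr0 => <-.
  have -> : (z0%:~R + n%:R * x0%:~R : R) = (z0 + n%:Z * x0)%:~R.
    by rewrite rmorphD rmorphM.
  rewrite !horner_map -rmorphB -Hpol_mul rmorphM /=; ring.
set Q := c1 *: PR + (c2 * x0%:~R) *: 'X
         - (c1 * PR.[z0%:~R] + c2 * x0%:~R * z0%:~R)%:P.
have hQ n : Q.[z0%:~R + n%:R * x0%:~R] = 0.
  rewrite /Q !hornerE -(E2 n); ring.
have Q0 : Q = 0.
  apply/eqP; apply: contraT => hQ'.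
  have [n] := @arith_nonroot _ _ (z0%:~R) _ hx0R hQ'.
  by rewrite hQ eqxx.
have hd1 : ((size P).-1 == 1%N) = false by case: (size P) hdeg => [|[|[|m]]].
have hd0 : ((size P).-1 == 0%N) = false by case: (size P) hdeg => [|[|[|m]]].
have hPn0 : P != 0 by apply: contraTneq hdeg => ->; rewrite size_poly0.
have c10 : c1 = 0.
  have : Q`_(size P).-1 = 0 by rewrite Q0 coef0.
  rewrite /Q coefB coefD !coefZ coefX coefC coef_map /= hd1 hd0 mulr0 subr0 addr0.
  rewrite -lead_coefE => /eqP; rewrite mulf_eq0 intr_eq0 lead_coef_eq0 (negbTE hPn0) orbF.
  by move/eqP.
have c20 : c2 = 0.
  have := E 1%N; rewrite c10 mul0r add0r mul1r => /eqP; rewrite mulf_eq0 (negbTE hx0R) orbF.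
  by move/eqP.
have c0n0 : c0 != 0.
  apply/eqP => c00; move: hi; rewrite -/k (hk0 c00 c10 c20) eqxx //.
have hxinv x y z : Gorbit P v0 (x, y, z) -> x = x0.
  move=> /hconst; rewrite -(hconst _ _ _ orb0) c10 c20 !mul0r !addr0.
  by move/(mulfI c0n0)/intr_inj.
have [y1 [z1 [hy1 horb]]] : exists y1 z1, y1 != 0 /\ Gorbit P v0 (x0, y1, z1).
  case: (eqVneq y0 0) => [y00|hy0]; last by exists y0, z0.
  have [n hn] := Pnc P hdeg z0 x0 hx0.
  exists (Hpol P n x0 z0), (z0 + n%:Z * x0); split.
    apply: contra hn => /eqP h; by rewrite -subr_eq0 -Hpol_mul h mulr0.
  by have := orbS1 n _ orb0; rewrite /S1 /v0 y00 add0r.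
have [m hm] := Pnc P hdeg z1 y1 hy1.
have := orbS2 m _ horb; rewrite /S2 /= => /hxinv h.
have hH : Hpol P m y1 z1 = 0 by apply: (addrI x0); rewrite addr0.
by move: hm; rewrite -subr_eq0 -Hpol_mul hH mulr0 eqxx.
Qed.
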